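(* Let $\gamma(z)=\sum_{n=1}^{\infty} z^{n-1}\left(\frac{1}{n}-\log\frac{n+1}{n}\right)$ for $z$ in the closed unit disk $D=\{z\in\mathbb{C}:|z|\le 1\}$. Then $\gamma$ is continuous on $D$ and holomorphic on the interior of $D$. However, the left-hand derivative of $\gamma$ at $z=1$ does not exist; more precisely, $$\lim_{t\to 1^-}\frac{\gamma(1)-\gamma(t)}{1-t}=+\infty.$$ In particular, the Taylor series expansion of $\gamma(z)$ at $z=0$ has radius of convergence $1$. *)

(* Defs.v *)
From Stdlib Require Import Reals.
From Coquelicot Require Import Coquelicot.
Open Scope R_scope.

(* Coefficients, 0-indexed: gamma_coef n = 1/(n+1) - ln((n+2)/(n+1)),
   so that gamma(z) = sum_{n>=0} gamma_coef n * z^n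
   = sum_{n>=1} z^(n-1) (1/n - log((n+1)/n)). *)
Definition gamma_coef (n : nat) : R :=
  / INR (S n) - ln (INR (S (S n)) / INR (S n)).

Definition gamma_term (z : C) (n : nat) : C :=
  mult (RtoC (gamma_coef n)) (@pow_n C_Ring z n).

(* The sum of the series (real and imaginary parts summed separately,
   via Coquelicot's total [Series]); on D the series converges and this is its sum. *)
Definition gamma (z : C) : C :=
  (Series (fun n => Re (gamma_term z n)), Series (fun n => Im (gamma_term z n))).

Definition unit_disk (z : C) : Prop := Cmod z <= 1.

(* Main.v *)
Require Import Defs.
From Stdlib Require Import Reals Lra Lia.
From Coquelicot Require Import Coquelicot.
Open Scope R_scope.



Lemma mono_deriv (f df : R -> R) x : 0 <= x ->
  (forall y, 0 <= y -> is_derive f y (df y)) ->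
  (forall y, 0 <= y -> 0 <= df y) -> f 0 <= f x.
Proof.
  intros Hx Hd Hp.
  destruct (MVT_gen f 0 x df) as [c [Hc Heq]].
  - intros y Hy. apply Hd. unfold Rmin in Hy; destruct Rle_dec; lra.
  - intros y Hy. apply continuity_pt_filterlim. apply (@ex_derive_continuous R_AbsRing R_NormedModule).
    eexists. apply Hd. unfold Rmin in Hy; destruct Rle_dec; lra.
  - unfold Rmin, Rmax in Hc; destruct Rle_dec; try lra.
    assert (0 <= df c * (x - 0)). apply Rmult_le_pos. apply Hp; lra. lra. lra.
Qed.

Lemma ln_lower x : 0 <= x -> x - x^2/2 <= ln (1+x).
Proof.
  intros Hx.
  assert (H := mono_deriv (fun y => ln (1+y) - y + y^2/2) (fun y => y^2/(1+y)) x Hx).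
  cbv beta in H. rewrite Rplus_0_r, ln_1 in H.
  cut (0 - 0 + 0^2/2 <= ln (1 + x) - x + x^2/2). lra.
  apply H.
  - intros y Hy. auto_derive. lra. field. lra.
  - intros y Hy. apply Rmult_le_pos. nra. apply Rlt_le, Rinv_0_lt_compat. lra.
Qed.

Lemma ln_upper x : 0 <= x -> ln (1+x) <= x - x^2/(2*(1+x)).
Proof.
  intros Hx.
  assert (H := mono_deriv (fun y => y - y^2/(2*(1+y)) - ln (1+y)) (fun y => y^2/(2*(1+y)^2)) x Hx).
  cbv beta in H. rewrite Rplus_0_r, ln_1 in H.
  cut (0 - 0^2/(2*1) - 0 <= x - x^2/(2*(1+x)) - ln (1 + x)). lra.
  apply H.
  - intros y Hy. auto_derive. lra. field. lra.
  - intros y Hy. apply Rmult_le_pos. nra. apply Rlt_le, Rinv_0_lt_compat. nra.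
Qed.

Lemma coef_eq n : gamma_coef n = / (INR n + 1) - ln (1 + / (INR n + 1)).
Proof.
  unfold gamma_coef. rewrite !S_INR. pose proof (pos_INR n).
  replace ((INR n + 1 + 1) / (INR n + 1)) with (1 + / (INR n + 1)) by (field; lra).
  reflexivity.
Qed.

Lemma coef_lower n : / (2 * (INR n + 1) * (INR n + 2)) <= gamma_coef n.
Proof.
  rewrite coef_eq. pose proof (pos_INR n).
  assert (0 <= / (INR n + 1)) by (apply Rlt_le, Rinv_0_lt_compat; lra).
  pose proof (ln_upper _ H0).
  replace (/ (2 * (INR n + 1) * (INR n + 2))) with ((/ (INR n + 1))^2/(2*(1 + / (INR n + 1)))).
  lra. field. lra.
Qed.

Lemma coef_upper n : gamma_coef n <= / (2 * (INR n + 1)^2).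
Proof.
  rewrite coef_eq. pose proof (pos_INR n).
  assert (0 <= / (INR n + 1)) by (apply Rlt_le, Rinv_0_lt_compat; lra).
  pose proof (ln_lower _ H0).
  replace (/ (2 * (INR n + 1)^2)) with ((/ (INR n + 1))^2/2). lra. field. lra.
Qed.

Lemma coef_pos n : 0 < gamma_coef n.
Proof.
  eapply Rlt_le_trans; [|apply coef_lower]. pose proof (pos_INR n).
  apply Rinv_0_lt_compat. nra.
Qed.

Lemma coef_le1 n : gamma_coef n <= / ((INR n + 1) * (INR n + 2)).
Proof.
  eapply Rle_trans; [apply coef_upper|]. pose proof (pos_INR n).
  apply Rinv_le_contravar. nra. nra.
Qed.

Lemma coef_n2 n : INR n ^ 2 * gamma_coef n <= / 2.
Proof.
  pose proof (coef_upper n). pose proof (pos_INR n). pose proof (coef_pos n).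
  apply Rle_trans with (INR n ^ 2 * / (2 * (INR n + 1)^2)).
  apply Rmult_le_compat_l; nra.
  apply Rmult_le_reg_r with (2 * (INR n + 1)^2). nra.
  field_simplify. nra. nra.
Qed.


Lemma ser_bound (a b : nat -> R) : (forall n, Rabs (a n) <= b n) -> ex_series b ->
  ex_series a /\ ex_series (fun n => Rabs (a n)) /\ Rabs (Series a) <= Series b.
Proof.
  intros Hb Hs.
  assert (Ha : ex_series (fun n => Rabs (a n))).
  { apply (@ex_series_le R_AbsRing R_CompleteNormedModule _ b); auto.
    intros n. change (Rabs (Rabs (a n)) <= b n). rewrite Rabs_Rabsolu. auto. }
  split; [|split; auto].
  - apply (@ex_series_le R_AbsRing R_CompleteNormedModule _ b); auto.
  - eapply Rle_trans. apply Series_Rabs; auto.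
    apply Series_le; auto. intros n; split; auto. apply Rabs_pos.
Qed.

Lemma lim_inv_n : is_lim_seq (fun n => / (INR n + 1)) 0.
Proof.
  assert (H : is_lim_seq (fun n => INR n + 1) p_infty).
  { apply is_lim_seq_ext with (fun n => INR (S n)).
    intros; rewrite S_INR; auto. apply (is_lim_seq_incr_1 INR p_infty). apply is_lim_seq_INR. }
  apply (is_lim_seq_inv _ _ H). discriminate.
Qed.

Lemma tele_sum N : sum_f_R0 (fun n => / (INR n + 1) - / (INR n + 2)) N = 1 - / (INR N + 2).
Proof.
  induction N.
  - simpl sum_f_R0. simpl INR. field.
  - rewrite tech5, IHN, S_INR. pose proof (pos_INR N). field. lra.
Qed.

Lemma tele_series : is_series (fun n => / (INR n + 1) - / (INR n + 2)) 1.
Proof.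
  unfold is_series. eapply filterlim_ext. intros; symmetry; rewrite sum_n_Reals; apply tele_sum.
  change (is_lim_seq (fun N => 1 - / (INR N + 2)) 1).
  assert (H : is_lim_seq (fun n => / (INR n + 2)) 0).
  apply is_lim_seq_ext with (fun n => / (INR (S n) + 1)).
  intros. rewrite S_INR. f_equal. ring.
  apply (is_lim_seq_incr_1 (fun n => / (INR n + 1))). apply lim_inv_n.
  pose proof (is_lim_seq_minus' _ _ 1 0 (is_lim_seq_const 1) H) as H1.
  rewrite Rminus_0_r in H1. exact H1.
Qed.


Lemma ser_split (a b : nat -> R) N : (forall n, Rabs (a n) <= b n) -> ex_series b ->
  Rabs (Series a) <= sum_f_R0 (fun n => Rabs (a n)) N + Series (fun k => b (S N + k)%nat).
Proof.
  intros Hb Hs. destruct (ser_bound a b Hb Hs) as [Ha _].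
  rewrite (Series_incr_n a (S N)) by (auto; lia). simpl pred.
  eapply Rle_trans. apply Rabs_triang. apply Rplus_le_compat.
  apply sum_f_R0_triangle.
  apply (ser_bound (fun k => a (S N + k)%nat)). auto.
  apply (ex_series_incr_n b (S N)). auto.
Qed.

Lemma tail_small (b : nat -> R) eps : ex_series b -> 0 < eps ->
  exists N, Series (fun k => b (S N + k)%nat) < eps.
Proof.
  intros Hs He. pose proof (Series_correct _ Hs) as H.
  unfold is_series in H. destruct (proj1 (filterlim_locally _ _) H (mkposreal _ He)) as [N0 HN]. exists N0.
  specialize (HN N0 (le_n _)). simpl in HN.
  rewrite (Series_incr_n b (S N0)) in HN by (auto; lia). simpl pred in HN.
  rewrite sum_n_Reals in HN. unfold ball in HN; simpl in HN. unfold AbsRing_ball, abs, minus, plus, opp in HN; simpl in HN.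
  simpl. apply Rabs_def2 in HN. lra.
Qed.

Definition CS (u : nat -> C) : C := (Series (fun n => Re (u n)), Series (fun n => Im (u n))).

Lemma Cmod_le_sum x : Cmod x <= Rabs (Re x) + Rabs (Im x).
Proof.
  pose proof (Cmod2_alt x). pose proof (Cmod_ge_0 x).
  pose proof (pow2_abs (Re x)). pose proof (pow2_abs (Im x)).
  pose proof (Rabs_pos (Re x)). pose proof (Rabs_pos (Im x)).
  nra.
Qed.

Lemma im_le_Cmod x : Rabs (Im x) <= Cmod x.
Proof. pose proof (Rmax_Cmod x). unfold Im. unfold Rmax in H. destruct Rle_dec; lra. Qed.

Lemma CS_ex u b : (forall n, Cmod (u n) <= b n) -> ex_series b ->
  ex_series (fun n => Re (u n)) /\ ex_series (fun n => Im (u n)) /\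
  Rabs (Re (CS u)) <= Series b /\ Rabs (Im (CS u)) <= Series b.
Proof.
  intros Hb Hs.
  destruct (ser_bound (fun n => Re (u n)) b) as [H1 [_ H2]]; auto.
  intros n; eapply Rle_trans; [apply re_le_Cmod|auto].
  destruct (ser_bound (fun n => Im (u n)) b) as [H3 [_ H4]]; auto.
  intros n; eapply Rle_trans; [apply im_le_Cmod|auto].
Qed.

Lemma sum_n_C (u : nat -> C) N :
  @sum_n C_AbelianMonoid u N = (sum_n (fun n => Re (u n)) N, sum_n (fun n => Im (u n)) N).
Proof.
  induction N.
  - rewrite !sum_O. destruct (u 0%nat); reflexivity.
  - rewrite !sum_Sn, IHN. reflexivity.
Qed.

Lemma CS_is_series u b : (forall n, Cmod (u n) <= b n) -> ex_series b ->
  @is_series C_AbsRing C_NormedModule u (CS u).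
Proof.
  intros Hb Hs. destruct (CS_ex u b Hb Hs) as [H1 [H2 _]].
  apply Series_correct in H1. apply Series_correct in H2.
  unfold is_series in *. apply filterlim_locally. intros eps.
  generalize (filter_and _ _ (proj1 (filterlim_locally _ _) H1 eps) (proj1 (filterlim_locally _ _) H2 eps)). apply filter_imp.
  intros N [HA HB]. change (@sum_n C_AbelianMonoid u N) with (@sum_n C_AbelianMonoid u N).
  rewrite sum_n_C. split; assumption.
Qed.

Lemma exs_scal_l a (x : nat -> R) : ex_series x -> ex_series (fun n => a * x n).
Proof. intros H. apply ex_series_ext with (fun n => x n * a). intros; apply Rmult_comm. apply ex_series_scal_r; auto. Qed.

Lemma lin2 a b (x y : nat -> R) : ex_series x -> ex_series y ->
  Series (fun n => a * x n + b * y n) = a * Series x + b * Series y.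
Proof.
  intros. rewrite Series_plus. rewrite !Series_scal_l. auto.
  apply exs_scal_l; auto. apply exs_scal_l; auto.
Qed.

Lemma CS_minus u v bu bv : (forall n, Cmod (u n) <= bu n) -> ex_series bu ->
  (forall n, Cmod (v n) <= bv n) -> ex_series bv ->
  CS (fun n => (u n - v n)%C) = (CS u - CS v)%C.
Proof.
  intros H1 H2 H3 H4.
  destruct (CS_ex u bu H1 H2) as [A1 [A2 _]].
  destruct (CS_ex v bv H3 H4) as [B1 [B2 _]].
  unfold CS. apply injective_projections; simpl.
  - transitivity (Series (fun n => 1 * Re (u n) + (-1) * Re (v n))).
    apply Series_ext; intros; unfold Re; simpl; ring.
    rewrite lin2 by auto. unfold Re; ring.
  - transitivity (Series (fun n => 1 * Im (u n) + (-1) * Im (v n))).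
    apply Series_ext; intros; unfold Im; simpl; ring.
    rewrite lin2 by auto. unfold Im; ring.
Qed.

Lemma CS_scal u b h : (forall n, Cmod (u n) <= b n) -> ex_series b ->
  CS (fun n => (h * u n)%C) = (h * CS u)%C.
Proof.
  intros H1 H2.
  destruct (CS_ex u b H1 H2) as [A1 [A2 _]].
  unfold CS. apply injective_projections; simpl.
  - transitivity (Series (fun n => fst h * Re (u n) + (- snd h) * Im (u n))).
    apply Series_ext; intros; unfold Re, Im; simpl; ring.
    rewrite lin2 by auto. unfold Re, Im; ring.
  - transitivity (Series (fun n => fst h * Im (u n) + snd h * Re (u n))).
    apply Series_ext; intros; unfold Re, Im; simpl; ring.
    rewrite lin2 by auto. unfold Re, Im; ring.
Qed.

Lemma CS_norm u b : (forall n, Cmod (u n) <= b n) -> ex_series b ->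
  Cmod (CS u) <= 2 * Series b.
Proof.
  intros H1 H2. destruct (CS_ex u b H1 H2) as [_ [_ [A B]]].
  pose proof (Cmod_le_sum (CS u)). lra.
Qed.

Lemma CS_split u b N : (forall n, Cmod (u n) <= b n) -> ex_series b ->
  Cmod (CS u) <= 2 * (sum_f_R0 (fun n => Cmod (u n)) N + Series (fun k => b (S N + k)%nat)).
Proof.
  intros H1 H2. pose proof (Cmod_le_sum (CS u)).
  assert (A : Rabs (Re (CS u)) <= sum_f_R0 (fun n => Cmod (u n)) N + Series (fun k => b (S N + k)%nat)).
  { eapply Rle_trans. apply (ser_split (fun n => Re (u n)) b N); auto.
    intros n; eapply Rle_trans; [apply re_le_Cmod|auto].
    apply Rplus_le_compat_r. apply sum_Rle. intros; apply re_le_Cmod. }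
  assert (B : Rabs (Im (CS u)) <= sum_f_R0 (fun n => Cmod (u n)) N + Series (fun k => b (S N + k)%nat)).
  { eapply Rle_trans. apply (ser_split (fun n => Im (u n)) b N); auto.
    intros n; eapply Rle_trans; [apply im_le_Cmod|auto].
    apply Rplus_le_compat_r. apply sum_Rle. intros; apply im_le_Cmod. }
  lra.
Qed.


Lemma pow_n_C (z : C) n : @pow_n C_Ring z n = Cpow z n.
Proof. induction n; simpl; auto. Qed.

Lemma term_eq z n : gamma_term z n = (RtoC (gamma_coef n) * Cpow z n)%C.
Proof. unfold gamma_term. rewrite pow_n_C. reflexivity. Qed.

Lemma gamma_CS z : gamma z = CS (gamma_term z).
Proof. reflexivity. Qed.

Lemma coef_ex : ex_series gamma_coef.
Proof.
  apply (@ex_series_le R_AbsRing R_CompleteNormedModule _ (fun n => / (INR n + 1) - / (INR n + 2))).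
  - intros n. change (Rabs (gamma_coef n) <= / (INR n + 1) - / (INR n + 2)).
    rewrite Rabs_pos_eq by (apply Rlt_le, coef_pos).
    eapply Rle_trans. apply coef_le1. pose proof (pos_INR n).
    right. field. lra.
  - exists 1. apply tele_series.
Qed.

Lemma pow_le_1 x n : 0 <= x <= 1 -> x ^ n <= 1.
Proof. intros H. rewrite <- (pow1 n). apply pow_incr. auto. Qed.

Lemma term_bound z n : Cmod z <= 1 -> Cmod (gamma_term z n) <= gamma_coef n.
Proof.
  intros Hz. rewrite term_eq, Cmod_mult, Cmod_R, Cmod_pow.
  rewrite Rabs_pos_eq by (apply Rlt_le, coef_pos).
  rewrite <- (Rmult_1_r (gamma_coef n)) at 2.
  apply Rmult_le_compat_l. apply Rlt_le, coef_pos.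
  apply pow_le_1. split; auto. apply Cmod_ge_0.
Qed.

Lemma ball_C (x y : C) e : ball x e y <-> Rabs (Re (y - x)%C) < e /\ Rabs (Im (y - x)%C) < e.
Proof. unfold ball; simpl. unfold prod_ball, AbsRing_ball, abs, minus, plus, opp; simpl. tauto. Qed.

Lemma ball_of_Cmod (x y : C) (e : R) : Cmod (y - x)%C < e -> ball x e y.
Proof.
  intros H. apply (proj2 (ball_C x y e)). split.
  eapply Rle_lt_trans. apply re_le_Cmod. auto.
  eapply Rle_lt_trans. apply im_le_Cmod. auto.
Qed.

Lemma Cmod_of_ball (x y : C) (e : R) : ball x e y -> Cmod (y - x)%C < 2 * e.
Proof.
  intros H. apply (proj1 (ball_C x y e)) in H. destruct H. pose proof (Cmod_le_sum (y - x)%C). lra.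
Qed.

Lemma pow_diff (w z : C) n : Cmod w <= 1 -> Cmod z <= 1 ->
  Cmod (Cpow w n - Cpow z n)%C <= INR n * Cmod (w - z)%C.
Proof.
  intros Hw Hz. induction n.
  - simpl. replace (1 - 1)%C with (RtoC 0) by (apply injective_projections; simpl; ring).
    rewrite Cmod_0. lra.
  - rewrite !Cpow_S, S_INR.
    replace (w * Cpow w n - z * Cpow z n)%C with (w * (Cpow w n - Cpow z n) + (w - z) * Cpow z n)%C by ring.
    eapply Rle_trans. apply Cmod_triangle. rewrite !Cmod_mult, Cmod_pow.
    pose proof (Cmod_ge_0 (Cpow w n - Cpow z n)%C). pose proof (Cmod_ge_0 (w - z)%C).
    pose proof (Cmod_ge_0 w). pose proof (Cmod_ge_0 z).
    assert (Cmod z ^ n <= 1) by (apply pow_le_1; lra).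
    assert (0 <= Cmod z ^ n) by (apply pow_le; lra).
    nra.
Qed.

Lemma coef_n1 n : INR n * gamma_coef n <= 1.
Proof.
  pose proof (coef_upper n). pose proof (pos_INR n). pose proof (coef_pos n).
  apply Rle_trans with (INR n * / (2 * (INR n + 1)^2)).
  apply Rmult_le_compat_l; nra.
  apply Rmult_le_reg_r with (2 * (INR n + 1)^2). nra.
  field_simplify. nra. nra.
Qed.

Lemma sum_const_le (f : nat -> R) M N : (forall n, f n <= M) -> sum_f_R0 f N <= INR (S N) * M.
Proof.
  intros H. induction N. simpl. rewrite Rmult_1_l. auto.
  rewrite tech5. rewrite (S_INR (S N)). specialize (H (S N)). lra.
Qed.

Lemma part_cont : forall z : C, unit_disk z ->
  filterlim gamma (within unit_disk (locally z)) (locally (gamma z)).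
Proof.
  intros z Hz. apply filterlim_locally. intros eps.
  assert (Hb : ex_series (fun n => 2 * gamma_coef n)) by (apply exs_scal_l, coef_ex).
  assert (He4 : 0 < eps / 4) by (destruct eps; simpl; lra).
  destruct (tail_small _ _ Hb He4) as [N HN].
  assert (Hd : 0 < eps / (8 * (INR N + 1))).
  { pose proof (pos_INR N). destruct eps; simpl. apply Rdiv_lt_0_compat; lra. }
  exists (mkposreal _ Hd). intros w Hw Hwd. simpl in Hw.
  apply Cmod_of_ball in Hw.
  apply ball_of_Cmod.
  unfold unit_disk in *.
  rewrite !gamma_CS.
  rewrite <- (CS_minus _ _ gamma_coef gamma_coef) by (auto using term_bound, coef_ex).
  eapply Rle_lt_trans. apply (CS_split _ (fun n => 2 * gamma_coef n) N).
  - intros n. rewrite !term_eq.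
    replace (gamma_coef n * Cpow w n - gamma_coef n * Cpow z n)%C with (gamma_coef n * (Cpow w n - Cpow z n))%C by ring.
    rewrite Cmod_mult, Cmod_R, Rabs_pos_eq by (apply Rlt_le, coef_pos).
    rewrite (Rmult_comm 2). apply Rmult_le_compat_l. apply Rlt_le, coef_pos.
    eapply Rle_trans. apply Cmod_triangle. rewrite Cmod_opp, !Cmod_pow.
    assert (Cmod w ^ n <= 1) by (apply pow_le_1; split; auto; apply Cmod_ge_0).
    assert (Cmod z ^ n <= 1) by (apply pow_le_1; split; auto; apply Cmod_ge_0). lra.
  - auto.
  - assert (sum_f_R0 (fun n => Cmod (gamma_term w n - gamma_term z n)%C) N <= INR (S N) * (2 * (eps / (8 * (INR N + 1))))).
    { apply sum_const_le. intros n. rewrite !term_eq.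
      replace (gamma_coef n * Cpow w n - gamma_coef n * Cpow z n)%C with (gamma_coef n * (Cpow w n - Cpow z n))%C by ring.
      rewrite Cmod_mult, Cmod_R, Rabs_pos_eq by (apply Rlt_le, coef_pos).
      eapply Rle_trans. apply Rmult_le_compat_l. apply Rlt_le, coef_pos. apply pow_diff; auto.
      pose proof (coef_n1 n). pose proof (coef_pos n). pose proof (pos_INR n).
      pose proof (Cmod_ge_0 (w - z)%C).
      apply Rle_trans with (INR n * gamma_coef n * Cmod (w - z)%C). right; ring.
      apply Rle_trans with (1 * Cmod (w - z)%C). apply Rmult_le_compat_r; lra. lra. }
    rewrite S_INR in H.
    replace ((INR N + 1) * (2 * (eps / (8 * (INR N + 1))))) with (eps / 4) in H.
    2:{ pose proof (pos_INR N). field. lra. }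
    lra.
Qed.


Lemma Fbound (w z : C) r n : Cmod w <= r -> Cmod z <= r -> 0 < r ->
  r^2 * Cmod (Cpow w n - Cpow z n - RtoC (INR n) * (w - z) * Cpow z (pred n))%C
  <= INR n ^ 2 * Cmod (w - z)%C ^ 2 * r ^ n.
Proof.
  intros Hw Hz Hr.
  pose proof (Cmod_ge_0 (w - z)%C) as Hh.
  assert (H : forall n, 
    r^2 * Cmod (Cpow w n - Cpow z n - RtoC (INR n) * (w - z) * Cpow z (pred n))%C
      <= INR n ^ 2 * Cmod (w - z)%C ^ 2 * r ^ n /\
    r^2 * Cmod (Cpow w (S n) - Cpow z (S n) - RtoC (INR (S n)) * (w - z) * Cpow z (pred (S n)))%C
      <= INR (S n) ^ 2 * Cmod (w - z)%C ^ 2 * r ^ (S n)).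
  2: apply H.
  induction n0.
  - split.
    + simpl. replace (1 - 1 - 0 * (w - z) * 1)%C with (RtoC 0) by (apply injective_projections; simpl; ring).
      rewrite Cmod_0. lra.
    + simpl pred. simpl INR. rewrite !Cpow_S. simpl Cpow.
      replace (w * 1 - z * 1 - 1 * (w - z) * 1)%C with (RtoC 0) by (apply injective_projections; simpl; ring).
      rewrite Cmod_0. rewrite Rmult_0_r. apply Rmult_le_pos. apply Rmult_le_pos. apply pow2_ge_0. apply pow2_ge_0. apply pow_le; lra.
  - destruct IHn0 as [_ IH]. split; auto.
    set (m := n0) in *.
    simpl pred in *.
    replace (Cpow w (S (S m)) - Cpow z (S (S m)) - RtoC (INR (S (S m))) * (w - z) * Cpow z (S m))%C
      with (w * (Cpow w (S m) - Cpow z (S m) - RtoC (INR (S m)) * (w - z) * Cpow z m)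
            + RtoC (INR (S m)) * ((w - z) * (w - z)) * Cpow z m)%C.
    2:{ rewrite !Cpow_S. rewrite !S_INR. rewrite !RtoC_plus. ring. }
    set (X := Cmod (Cpow w (S m) - Cpow z (S m) - RtoC (INR (S m)) * (w - z) * Cpow z m)%C) in *.
    assert (HX : Cmod (w * (Cpow w (S m) - Cpow z (S m) - RtoC (INR (S m)) * (w - z) * Cpow z m)
            + RtoC (INR (S m)) * ((w - z) * (w - z)) * Cpow z m)%C
            <= r * X + INR (S m) * Cmod (w - z)%C ^ 2 * r ^ m).
    { eapply Rle_trans. apply Cmod_triangle. rewrite !Cmod_mult, Cmod_R, Cmod_pow.
      rewrite Rabs_pos_eq by apply pos_INR.
      pose proof (Cmod_ge_0 z). pose proof (pos_INR (S m)).
      assert (Cmod z ^ m <= r ^ m) by (apply pow_incr; lra).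
      assert (0 <= X) by apply Cmod_ge_0.
      apply Rplus_le_compat. apply Rmult_le_compat_r; auto.
      simpl pow. rewrite Rmult_1_r.
      apply Rmult_le_compat_l. apply Rmult_le_pos; auto. apply Rmult_le_pos; auto.
      auto. }
    rewrite !S_INR in *. simpl pow in *.
    set (A := r ^ m) in *. set (hh := Cmod (w - z)%C) in *.
    assert (0 <= A) by (apply pow_le; lra).
    pose proof (pos_INR m).
    assert (0 <= X) by apply Cmod_ge_0.
    eapply Rle_trans. apply Rmult_le_compat_l. nra. apply HX.
    assert (0 <= hh * hh * A) by (apply Rmult_le_pos; nra).
    assert (0 <= r * A) by nra.
    assert (IH2 : r * (r * 1) * (r * X) <= r * ((INR m + 1) * ((INR m + 1) * 1) * (hh * (hh * 1)) * (r * A))).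
    { replace (r * (r * 1) * (r * X)) with (r * (r * (r * 1) * X)) by ring. apply Rmult_le_compat_l; lra. }
    set (P := hh * hh * r * r * A).
    assert (HP : 0 <= (INR m + 2) * P) by (unfold P; apply Rmult_le_pos; [lra|]; repeat apply Rmult_le_pos; lra).
    replace (r * (r * 1) * (r * X + (INR m + 1) * (hh * (hh * 1)) * A)) with (r * (r * 1) * (r * X) + (INR m + 1) * P) by (unfold P; ring).
    replace (r * ((INR m + 1) * ((INR m + 1) * 1) * (hh * (hh * 1)) * (r * A))) with ((INR m + 1) * (INR m + 1) * P) in IH2 by (unfold P; ring).
    replace ((INR m + 1 + 1) * ((INR m + 1 + 1) * 1) * (hh * (hh * 1)) * (r * (r * A))) with ((INR m + 1) * (INR m + 1) * P + (INR m + 1) * P + (INR m + 2) * P) by (unfold P; ring).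
    lra.
Qed.

Lemma geom_ex r : 0 <= r < 1 -> ex_series (fun n => r ^ n).
Proof. intros H. exists (/ (1 - r)). apply is_series_geom. rewrite Rabs_pos_eq; lra. Qed.

Lemma geom_Series r : 0 <= r < 1 -> Series (fun n => r ^ n) = / (1 - r).
Proof. intros H. apply is_series_unique. apply is_series_geom. rewrite Rabs_pos_eq; lra. Qed.

Lemma part_deriv : forall z : C, Cmod z < 1 -> @ex_derive C_AbsRing C_NormedModule gamma z.
Proof.
  intros z Hz.
  pose proof (Cmod_ge_0 z) as Hz0.
  set (r := (1 + Cmod z) / 2).
  assert (Hr : 0 < r < 1) by (unfold r; lra).
  assert (Hzr : Cmod z < r) by (unfold r; lra).
  set (d := fun n => (RtoC (INR n * gamma_coef n) * Cpow z (pred n))%C).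
  assert (Hdb : forall n, Cmod (d n) <= / r * r ^ n).
  { intros n. unfold d. rewrite Cmod_mult, Cmod_R, Cmod_pow.
    pose proof (coef_n1 n). pose proof (coef_pos n). pose proof (pos_INR n).
    rewrite Rabs_pos_eq by nra.
    assert (Cmod z ^ pred n <= r ^ pred n) by (apply pow_incr; lra).
    assert (r ^ pred n <= / r * r ^ n).
    { destruct n. simpl. rewrite Rmult_1_r. rewrite <- Rinv_1. apply Rinv_le_contravar; lra.
      simpl pred. simpl pow. right. field. lra. }
    assert (0 <= Cmod z ^ pred n) by (apply pow_le; lra).
    apply Rle_trans with (1 * Cmod z ^ pred n). apply Rmult_le_compat_r; lra. lra. }
  assert (Hdex : ex_series (fun n => / r * r ^ n)) by (apply exs_scal_l, geom_ex; lra).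
  exists (CS d). unfold is_derive, filterdiff. split. apply is_linear_scal_l.
  intros x Hx. apply (@is_filter_lim_locally_unique C_AbsRing (AbsRing_NormedModule C_AbsRing)) in Hx. subst x.
  intros eps.
  set (K := / (r ^ 2 * (1 - r))).
  assert (HK : 0 < K) by (unfold K; apply Rinv_0_lt_compat; apply Rmult_lt_0_compat; [apply pow_lt|]; lra).
  assert (Hd : 0 < Rmin (r - Cmod z) (eps / K)).
  { apply Rmin_case. lra. apply Rdiv_lt_0_compat; auto. destruct eps; auto. }
  exists (mkposreal _ (Rlt_le_trans _ _ _ (Rdiv_lt_0_compat _ 2 Hd ltac:(lra)) (Rle_refl _))).
  intros w Hw. simpl in Hw.
  change (Cmod (w - z)%C < Rmin (r - Cmod z) (eps / K) / 2) in Hw.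
  assert (Hw' : Cmod (w - z)%C < Rmin (r - Cmod z) (eps / K)) by lra. clear Hw. rename Hw' into Hw.
  set (hh := Cmod (w - z)%C) in *.
  assert (Hh1 : hh < r - Cmod z) by (eapply Rlt_le_trans; [apply Hw| apply Rmin_l]).
  assert (Hh2 : hh < eps / K) by (eapply Rlt_le_trans; [apply Hw| apply Rmin_r]).
  assert (Hwr : Cmod w <= r).
  { replace w with (z + (w - z))%C by ring. eapply Rle_trans. apply Cmod_triangle. fold hh. lra. }
  assert (Hw1 : Cmod w <= 1) by lra.
  assert (Hz1 : Cmod z <= 1) by lra.
  pose proof (Cmod_ge_0 (w - z)%C) as Hh0. fold hh in Hh0.
  change (Cmod ((gamma w - gamma z) - (w - z) * CS d)%C <= eps * hh).
  rewrite !gamma_CS.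
  rewrite <- (CS_minus _ _ gamma_coef gamma_coef) by (auto using term_bound, coef_ex).
  rewrite <- (CS_scal d _ (w - z)%C Hdb Hdex).
  rewrite <- (CS_minus _ _ (fun n => 2 * gamma_coef n) (fun n => hh * (/ r * r ^ n))).
  2:{ intros n. rewrite !term_eq.
    replace (gamma_coef n * Cpow w n - gamma_coef n * Cpow z n)%C with (gamma_coef n * (Cpow w n - Cpow z n))%C by ring.
    rewrite Cmod_mult, Cmod_R, Rabs_pos_eq by (apply Rlt_le, coef_pos).
    rewrite (Rmult_comm 2). apply Rmult_le_compat_l. apply Rlt_le, coef_pos.
    eapply Rle_trans. apply Cmod_triangle. rewrite Cmod_opp, !Cmod_pow.
    assert (Cmod w ^ n <= 1) by (apply pow_le_1; split; auto; apply Cmod_ge_0).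
    assert (Cmod z ^ n <= 1) by (apply pow_le_1; split; auto; apply Cmod_ge_0). lra. }
  2:{ apply exs_scal_l, coef_ex. }
  2:{ intros n. rewrite Cmod_mult. fold hh. apply Rmult_le_compat_l; auto. }
  2:{ apply exs_scal_l; auto. }
  eapply Rle_trans. apply (CS_norm _ (fun n => (hh ^ 2 / (2 * r ^ 2)) * r ^ n)).
  - intros n. rewrite !term_eq. unfold d.
    replace (gamma_coef n * Cpow w n - gamma_coef n * Cpow z n - (w - z) * ((INR n * gamma_coef n)%R * Cpow z (pred n)))%C
      with (gamma_coef n * (Cpow w n - Cpow z n - RtoC (INR n) * (w - z) * Cpow z (pred n)))%C
      by (rewrite RtoC_mult; ring).
    rewrite Cmod_mult, Cmod_R, Rabs_pos_eq by (apply Rlt_le, coef_pos).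
    pose proof (Fbound w z r n Hwr (Rlt_le _ _ Hzr) (proj1 Hr)) as HF.
    fold hh in HF.
    set (Fn := Cmod (Cpow w n - Cpow z n - RtoC (INR n) * (w - z) * Cpow z (pred n))%C) in *.
    pose proof (coef_n2 n). pose proof (coef_pos n).
    assert (0 <= r ^ n) by (apply pow_le; lra).
    assert (0 < r ^ 2) by (apply pow_lt; lra).
    apply Rmult_le_reg_l with (r ^ 2); auto.
    replace (r ^ 2 * (hh ^ 2 / (2 * r ^ 2) * r ^ n)) with (/ 2 * (hh ^ 2 * r ^ n)) by (field; lra).
    apply Rle_trans with (gamma_coef n * (INR n ^ 2 * hh ^ 2 * r ^ n)).
    replace (r ^ 2 * (gamma_coef n * Fn)) with (gamma_coef n * (r ^ 2 * Fn)) by ring.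
    apply Rmult_le_compat_l; lra.
    replace (gamma_coef n * (INR n ^ 2 * hh ^ 2 * r ^ n)) with ((INR n ^ 2 * gamma_coef n) * (hh ^ 2 * r ^ n)) by ring.
    apply Rmult_le_compat_r. apply Rmult_le_pos; auto. apply pow2_ge_0. auto.
  - apply exs_scal_l, geom_ex; lra.
  - rewrite Series_scal_l, geom_Series by lra.
    assert (hh * K <= eps).
    { apply Rmult_le_reg_r with (/ K). apply Rinv_0_lt_compat; auto.
      rewrite Rmult_assoc, Rinv_r by lra. apply Rlt_le. rewrite Rmult_1_r. auto. }
    replace (2 * (hh ^ 2 / (2 * r ^ 2) * / (1 - r))) with (hh * (hh * K)) by (unfold K; field; lra).
    replace (eps * hh) with (hh * eps) by ring.
    apply Rmult_le_compat_l; auto.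
Qed.


Lemma term_real t n : gamma_term (RtoC t) n = RtoC (gamma_coef n * t ^ n).
Proof. rewrite term_eq, <- RtoC_pow, <- RtoC_mult. reflexivity. Qed.

Lemma part_im : forall t : R, -1 <= t <= 1 -> Im (gamma (RtoC t)) = 0.
Proof.
  intros t _. change (Series (fun n => Im (gamma_term (RtoC t) n)) = 0).
  rewrite (Series_ext _ (fun n => 0 * 0)). rewrite Series_scal_l. ring.
  intros n. rewrite term_real, im_RtoC. ring.
Qed.

Lemma re_gamma t : Re (gamma (RtoC t)) = Series (fun n => gamma_coef n * t ^ n).
Proof.
  change (Series (fun n => Re (gamma_term (RtoC t) n)) = Series (fun n => gamma_coef n * t ^ n)).
  apply Series_ext. intros n. rewrite term_real, re_RtoC. auto.
Qed.

Lemma partial_le (a : nat -> R) N : (forall n, 0 <= a n) -> ex_series a -> sum_f_R0 a N <= Series a.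
Proof.
  intros Ha Hs. rewrite (Series_incr_n a (S N)) by (auto; lia). simpl pred.
  assert (0 <= Series (fun k => a (S N + k)%nat)).
  { rewrite <- (Rmult_0_l (Series (fun k => a (S N + k)%nat))). rewrite <- Series_scal_l.
    apply Series_le. intros n; rewrite Rmult_0_l; split; [lra| apply Ha]. apply (ex_series_incr_n a (S N)); auto. }
  lra.
Qed.

Lemma bern2 t n : 0 <= t <= 1 -> INR n * t ^ n * (1 - t) <= 1 - t ^ n.
Proof.
  intros Ht. induction n.
  - simpl. lra.
  - rewrite S_INR. simpl pow.
    assert (0 <= t ^ n) by (apply pow_le; lra).
    assert (t ^ n <= 1) by (apply pow_le_1; lra).
    pose proof (pos_INR n).
    assert (INR n * (t * t ^ n) * (1 - t) <= INR n * t ^ n * (1 - t)).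
    { apply Rmult_le_compat_r. lra. apply Rmult_le_compat_l. lra. nra. }
    assert (0 <= t ^ n * ((1 - t) * (1 - t))) by (apply Rmult_le_pos; nra). nra.
Qed.

Lemma bernoulli x n : 0 <= x <= 1 -> 1 - INR n * x <= (1 - x) ^ n.
Proof.
  intros Hx. induction n.
  - simpl. lra.
  - rewrite S_INR. simpl pow. pose proof (pos_INR n).
    assert (0 <= (1 - x) ^ n) by (apply pow_le; lra). nra.
Qed.

Lemma pow_anti t n m : 0 <= t <= 1 -> (n <= m)%nat -> t ^ m <= t ^ n.
Proof.
  intros Ht Hnm. replace m with (n + (m - n))%nat by lia. rewrite pow_add.
  assert (0 <= t ^ n) by (apply pow_le; lra).
  assert (t ^ (m - n) <= 1) by (apply pow_le_1; lra).
  assert (0 <= t ^ (m - n)) by (apply pow_le; lra). nra.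
Qed.

Lemma A_lower N : (ln (INR N + 2) - ln 2) / 6 <= sum_f_R0 (fun n => INR n * gamma_coef n) N.
Proof.
  induction N.
  - simpl. replace (0 + 2) with 2 by ring. lra.
  - rewrite tech5. rewrite S_INR.
    pose proof (pos_INR N).
    assert (Hl : ln (INR N + 1 + 2) - ln (INR N + 2) <= / (INR N + 2)).
    { rewrite <- ln_div by lra.
      replace ((INR N + 1 + 2) / (INR N + 2)) with (1 + / (INR N + 2)) by (field; lra).
      assert (0 <= / (INR N + 2)) by (apply Rlt_le, Rinv_0_lt_compat; lra).
      pose proof (ln_upper _ H0).
      assert (0 <= (/ (INR N + 2)) ^ 2 / (2 * (1 + / (INR N + 2)))).
      { apply Rmult_le_pos. apply pow2_ge_0. apply Rlt_le, Rinv_0_lt_compat; lra. }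
      lra. }
    pose proof (coef_lower (S N)). rewrite S_INR in H0.
    assert (/ (INR N + 2) <= 6 * ((INR N + 1) * / (2 * (INR N + 1 + 1) * (INR N + 1 + 2)))).
    { apply Rmult_le_reg_r with (2 * (INR N + 1 + 1) * (INR N + 1 + 2)). nra.
      field_simplify; try lra. apply Rle_div_l. lra. nra. }
    assert ((INR N + 1) * / (2 * (INR N + 1 + 1) * (INR N + 1 + 2)) <= (INR N + 1) * gamma_coef (S N)).
    { apply Rmult_le_compat_l; lra. }
    lra.
Qed.

Lemma exists_big (X : R) : exists N : nat, X < INR N.
Proof.
  destruct (Rle_dec 0 X).
  - destruct (nfloor_ex X r) as [n Hn]. exists (S n). rewrite S_INR. lra.
  - exists 0%nat. simpl. lra.
Qed.

Lemma part_lim : filterlim (fun t : R => (Re (gamma (RtoC 1)) - Re (gamma (RtoC t))) / (1 - t))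
            (at_left 1) (Rbar_locally p_infty).
Proof.
  intros P [M HM].
  set (M' := Rmax M 0 + 1).
  destruct (exists_big (exp (12 * M' + ln 2))) as [N HN].
  assert (HA : 2 * M' < sum_f_R0 (fun n => INR n * gamma_coef n) N).
  { eapply Rlt_le_trans; [|apply A_lower].
    assert (12 * M' + ln 2 < ln (INR N + 2)).
    { rewrite <- (ln_exp (12 * M' + ln 2)). apply ln_increasing. apply exp_pos. lra. }
    lra. }
  assert (Hd : 0 < / (2 * (INR N + 1))) by (apply Rinv_0_lt_compat; pose proof (pos_INR N); lra).
  unfold at_left, within, locally. exists (mkposreal _ Hd).
  intros t Ht Ht1. simpl in Ht.
  change (Rabs (t - 1) < / (2 * (INR N + 1))) in Ht.
  apply HM.
  pose proof (pos_INR N).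
  assert (Hdl : / (2 * (INR N + 1)) <= / 2).
  { apply Rinv_le_contravar; lra. }
  apply Rabs_def2 in Ht.
  assert (Htt : 0 <= t <= 1) by lra.
  rewrite !re_gamma.
  assert (E1 : ex_series (fun n => gamma_coef n * 1 ^ n)).
  { apply ex_series_ext with gamma_coef. intros n; rewrite pow1; symmetry; apply Rmult_1_r. apply coef_ex. }
  assert (E2 : ex_series (fun n => gamma_coef n * t ^ n)).
  { apply (ser_bound _ gamma_coef). intros n. rewrite Rabs_mult, Rabs_pos_eq by (apply Rlt_le, coef_pos).
    rewrite <- RPow_abs. pose proof (coef_pos n).
    assert (Rabs t ^ n <= 1) by (apply pow_le_1; split; [apply Rabs_pos| rewrite Rabs_pos_eq; lra]).
    assert (0 <= Rabs t ^ n) by (apply pow_le, Rabs_pos). nra. apply coef_ex. }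
  rewrite <- Series_minus by auto.
  assert (HS : (1 - t) * (t ^ N * sum_f_R0 (fun n => INR n * gamma_coef n) N)
     <= Series (fun n => gamma_coef n * 1 ^ n - gamma_coef n * t ^ n)).
  { eapply Rle_trans; [|apply partial_le].
    - rewrite scal_sum, scal_sum. apply sum_Rle. intros n Hn.
      rewrite pow1. pose proof (bern2 t n Htt). pose proof (pow_anti t n N Htt Hn).
      pose proof (coef_pos n). pose proof (pos_INR n).
      assert (0 <= t ^ N) by (apply pow_le; lra).
      apply Rle_trans with (gamma_coef n * (INR n * t ^ n * (1 - t))).
      2: { replace (gamma_coef n * 1 - gamma_coef n * t ^ n) with (gamma_coef n * (1 - t ^ n)) by ring. apply Rmult_le_compat_l; lra. }
      replace (INR n * gamma_coef n * t ^ N * (1 - t)) with (gamma_coef n * (INR n * t ^ N * (1 - t))) by ring.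
      apply Rmult_le_compat_l. lra. apply Rmult_le_compat_r. lra. apply Rmult_le_compat_l; lra.
    - intros n. rewrite pow1. pose proof (coef_pos n). assert (t ^ n <= 1) by (apply pow_le_1; lra). nra.
    - exists (Series (fun n => gamma_coef n * 1 ^ n) - Series (fun n => gamma_coef n * t ^ n)). exact (@is_series_minus R_AbsRing R_NormedModule _ _ _ _ (Series_correct _ E1) (Series_correct _ E2)). }
  assert (HtN : / 2 <= t ^ N).
  { replace t with (1 - (1 - t)) by ring. eapply Rle_trans; [|apply bernoulli; lra].
    assert (INR N * (1 - t) <= INR N * / (2 * (INR N + 1))) by (apply Rmult_le_compat_l; lra).
    assert (INR N * / (2 * (INR N + 1)) <= / 2).
    { apply Rmult_le_reg_r with (2 * (INR N + 1)). lra. field_simplify; lra. }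
    lra. }
  assert (HV : M < t ^ N * sum_f_R0 (fun n => INR n * gamma_coef n) N).
  { assert (M < M') by (unfold M'; pose proof (Rmax_l M 0); lra).
    assert (0 <= M') by (unfold M'; pose proof (Rmax_r M 0); lra).
    assert (0 <= (t ^ N - / 2) * sum_f_R0 (fun n => INR n * gamma_coef n) N) by (apply Rmult_le_pos; lra). nra. }
  apply Rlt_le_trans with (t ^ N * sum_f_R0 (fun n => INR n * gamma_coef n) N); auto.
  assert (H1t : 1 - t > 0) by lra. apply (proj1 (Rle_div_r _ _ _ H1t)). rewrite Rmult_comm. auto.
Qed.


Lemma ratio_bounds n : 1 - 3 / (INR n + 1) <= Rabs (gamma_coef (S n) / gamma_coef n) <= 1.
Proof.
  pose proof (coef_pos n) as Ha. pose proof (coef_pos (S n)) as Hb.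
  pose proof (coef_upper n). pose proof (coef_lower n).
  pose proof (coef_upper (S n)). pose proof (coef_lower (S n)).
  rewrite S_INR in *. pose proof (pos_INR n) as Hx. set (x := INR n) in *. clearbody x.
  rewrite Rabs_pos_eq by (apply Rlt_le, Rdiv_lt_0_compat; auto).
  split.
  - apply Rle_div_r. auto.
    destruct (Rle_dec 2 x).
    + assert (Hq : 0 <= 1 - 3 / (x + 1)).
      { apply Rle_trans with ((x - 2) / (x + 1)). apply Rmult_le_pos; [lra| apply Rlt_le, Rinv_0_lt_compat; lra].
        right. field. lra. }
      apply Rle_trans with ((1 - 3 / (x + 1)) * / (2 * (x + 1) ^ 2)).
      apply Rmult_le_compat_l; auto.
      eapply Rle_trans; [|apply H2].
      replace ((1 - 3 / (x + 1)) * / (2 * (x + 1) ^ 2)) with ((x - 2) / (2 * (x + 1) ^ 3)) by (field; lra).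
      apply Rle_div_l. nra.
      replace (/ (2 * (x + 1 + 1) * (x + 1 + 2)) * (2 * (x + 1) ^ 3)) with ((x + 1) ^ 3 / ((x + 1 + 1) * (x + 1 + 2))) by (field; lra).
      apply Rle_div_r. nra. nra.
    + assert (1 - 3 / (x + 1) < 0).
      { assert (E : 3 / (x + 1) * (x + 1) = 3) by (field; lra). nra. }
      nra.
  - apply Rle_div_l. auto. rewrite Rmult_1_l.
    eapply Rle_trans. apply H1. eapply Rle_trans; [|apply H0].
    apply Rinv_le_contravar. nra. nra.
Qed.

Lemma part_radius : CV_radius gamma_coef = Finite 1.
Proof.
  rewrite (CV_radius_finite_DAlembert gamma_coef 1).
  - rewrite Rinv_1. reflexivity.
  - intros n. apply Rgt_not_eq, coef_pos.
  - lra.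
  - apply is_lim_seq_le_le with (fun n => 1 - 3 / (INR n + 1)) (fun _ => 1).
    apply ratio_bounds.
    + pose proof (is_lim_seq_scal_l _ 3 _ lim_inv_n) as H. simpl in H. rewrite Rmult_0_r in H.
      pose proof (is_lim_seq_minus' _ _ 1 0 (is_lim_seq_const 1) H) as H1.
      rewrite Rminus_0_r in H1. exact H1.
    + apply is_lim_seq_const.
Qed.

Lemma part_series : forall z : C, unit_disk z -> @is_series C_AbsRing C_NormedModule (gamma_term z) (gamma z).
Proof.
  intros z Hz. rewrite gamma_CS. apply (CS_is_series _ gamma_coef).
  intros n. apply term_bound. auto. apply coef_ex.
Qed.

Theorem theorem5 :
  (forall z : C, unit_disk z -> @is_series C_AbsRing C_NormedModule (gamma_term z) (gamma z)) /\
  (forall z : C, unit_disk z -> filterlim gamma (within unit_disk (locally z)) (locally (gamma z))) /\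
  (forall z : C, Cmod z < 1 -> @ex_derive C_AbsRing C_NormedModule gamma z) /\
  (forall t : R, -1 <= t <= 1 -> Im (gamma (RtoC t)) = 0) /\
  filterlim (fun t : R => (Re (gamma (RtoC 1)) - Re (gamma (RtoC t))) / (1 - t))
            (at_left 1) (Rbar_locally p_infty) /\
  CV_radius gamma_coef = Finite 1.
Proof.
  split. exact part_series.
  split. exact part_cont.
  split. exact part_deriv.
  split. exact part_im.
  split. exact part_lim.
  exact part_radius.
Qed.
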